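(* Let $2\le n<d$ with $n=2$ or $n$ odd, let $t$ be as defined below, let $E\in\mathrm{SL}(d,q)$ and $T:=E^{-1}tE$. If $T$ is a weak doubling element, then $V_n+V_nT=V_n+V_nT^{-1}$.
   Context: Vectors are row vectors and matrices act from the right; $\mathrm{Fix}(g)=\{x\in\mathbb{F}_q^d: xg=x\}$. $e_1,\dots,e_d$ is the standard basis of $V=\mathbb{F}_q^d$, $V_n=\langle e_1,\dots,e_n\rangle$, $F_{d-n}=\langle e_{n+1},\dots,e_d\rangle$, and $n'=\min\{2n-1,d\}$. An element $c\in\mathrm{GL}(d,q)$ is a weak doubling element if (C1) $\dim(V_n+V_nc)=n'$ and (C2) if $n'<d$ then $\dim(F_{d-n}+\mathrm{Fix}(c))=d$. $E_{i,j}(\lambda)$ is the identity matrix with $(i,j)$ entry replaced by $\lambda$ ($i\ne j$). Here $q=p^f$. The element $t$ is: $E_{1,2}(1)$ if $n=2$; $\operatorname{diag}(z_1,I_{d-n})$ if $n>2$ and $p=2$; $\operatorname{diag}(z_2,I_{d-n})$ if $n>2$ and $p$ odd, where ($P_\sigma$ being the $n\times n$ matrix with $e_iP_\sigma=e_{\sigma(i)}$) $z_1=P_{(1,n,n-1,\dots,2)}$ with $(1,n)$ entry changed to $-1$ if $n$ is even, and $z_2=P_{(2,n,n-1,\dots,3)}$ with $(2,n)$ entry changed to $-1$ if $n$ is odd. *)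

(* Defs.v *)
From HB Require Import structures.
From mathcomp Require Import all_boot all_order all_algebra all_fingroup all_field.
Set Implicit Arguments. Unset Strict Implicit. Unset Printing Implicit Defensive.
Import GRing.Theory.
Local Open Scope ring_scope.

(* Indices are 0-based: paper's e_k is row index k-1. *)
Section Defs.
Variable F : fieldType.

(* V_n = <e_1..e_n> as a row-space (square matrix whose rows span it) *)
Definition Vsp (d n : nat) : 'M[F]_d := \matrix_(i, j) ((i == j) && (i < n)%N)%:R.
Definition Fsp (d n : nat) : 'M[F]_d := \matrix_(i, j) ((i == j) && (n <= i)%N)%:R.
Definition Fixsp (d : nat) (g : 'M[F]_d) : 'M[F]_d := kermx (g - 1%:M).
Definition nprime (d n : nat) : nat := minn (2 * n - 1) d.

Definition weak_doubling (d n : nat) (c : 'M[F]_d) : Prop :=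
  \rank (Vsp d n + Vsp d n *m c)%MS = nprime d n /\
  ((nprime d n < d)%N -> \rank (Fsp d n + Fixsp c)%MS = d).

(* permutations (0-based) of the paper: sigma1 = (1,n,n-1,...,2), sigma2 = (2,n,n-1,...,3) *)
Definition sigma1 (n i : nat) : nat := if i == 0%N then n.-1 else i.-1.
Definition sigma2 (n i : nat) : nat :=
  if i == 0%N then 0%N else if i == 1%N then n.-1 else i.-1.

Definition z1 (n : nat) : 'M[F]_n := \matrix_(i, j)
  if (i == 0%N :> nat) && (j == n.-1 :> nat) then (if ~~ odd n then -1 else 1)
  else (j == sigma1 n i :> nat)%:R.
Definition z2 (n : nat) : 'M[F]_n := \matrix_(i, j)
  if (i == 1%N :> nat) && (j == n.-1 :> nat) then (if odd n then -1 else 1)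
  else (j == sigma2 n i :> nat)%:R.

(* diag(z, I_{d-n}) for z : 'M_n *)
Definition blockdiag (d n : nat) (z : 'M[F]_n) : 'M[F]_d := \matrix_(i, j)
  match insub (val i : nat), insub (val j : nat) with
  | Some i', Some j' => z i' j'
  | _, _ => (i == j)%:R
  end.

Definition E12one (d : nat) : 'M[F]_d :=
  \matrix_(i, j) (((i == j) || ((i == 0%N :> nat) && (j == 1%N :> nat))))%:R.

Definition tElt (d n : nat) : 'M[F]_d :=
  if n == 2%N then E12one d
  else if 2 \in [pchar F] then blockdiag d (z1 n)
  else blockdiag d (z2 n).
End Defs.

(* Main.v *)
Require Import Defs.
From HB Require Import structures.
From mathcomp Require Import all_boot all_order all_algebra all_fingroup all_field.
From mathcomp Require Import zify.
Import GRing.Theory.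
Local Open Scope ring_scope.
Set Implicit Arguments. Unset Strict Implicit.

Lemma rank_rows_le (F : fieldType) (m d r : nat) (M : 'M[F]_(m, d)) (f : 'I_r -> 'I_m) :
  (forall i, (row i M <= rowsub f M)%MS) -> (\rank M <= r)%N.
Proof.
move=> H; apply: leq_trans (rank_leq_row (rowsub f M)).
by apply: mxrankS; apply/row_subP.
Qed.

Lemma subE (R : zmodType) m k (A B : 'M[R]_(m,k)) i j : (A - B) i j = A i j - B i j.
Proof. by rewrite !mxE. Qed.
Lemma rowent (R : Type) m k (A : 'M[R]_(m,k)) i j : row i A 0 j = A i j.
Proof. by rewrite !mxE. Qed.
Lemma ident (R : ringType) m (i j : 'I_m) : (1%:M : 'M[R]_m) i j = (i == j)%:R.
Proof. by rewrite !mxE. Qed.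

Section T.
Variable F : fieldType.
Variables d n : nat.
Hypothesis hn2 : (2 <= n)%N.
Hypothesis hnd : (n < d)%N.

Lemma bd_in (z : 'M[F]_n) (i j : 'I_d) (hi : (i < n)%N) (hj : (j < n)%N) :
  blockdiag d z i j = z (Ordinal hi) (Ordinal hj).
Proof.
rewrite mxE; case: insubP => [i' _ ei|]; last by rewrite hi.
case: insubP => [j' _ ej|]; last by rewrite hj.
by congr (z _ _); apply: val_inj.
Qed.

Lemma bd_out (z : 'M[F]_n) (i j : 'I_d) : ~~ ((i < n)%N && (j < n)%N) ->
  blockdiag d z i j = (i == j)%:R.
Proof.
rewrite negb_and => /orP[h|h]; rewrite mxE.
  by case: insubP => [? hh _|_] //; rewrite hh in h.
case: insubP => [? _ _|_] //.
by case: insubP => [? hh _|_] //; rewrite hh in h.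
Qed.

Lemma bd_row_out (z : 'M[F]_n) (i : 'I_d) : (n <= i)%N ->
  row i (blockdiag d z - 1%:M) = 0.
Proof.
move=> hi; apply/rowP => j; rewrite rowent subE ident bd_out ?mxE ?subrr //.
by rewrite negb_and -leqNgt hi.
Qed.

Definition ev (k : nat) : 'rV[F]_d := \row_j (j == k :> nat)%:R.

Lemma bd_row_in (z : 'M[F]_n) (i : 'I_d) (hi : (i < n)%N) (s : nat) :
  (s < n)%N ->
  (forall j (hj : (j < n)%N), z (Ordinal hi) (Ordinal hj) = (j == s)%:R) ->
  row i (blockdiag d z - 1%:M) = ev s - ev i.
Proof.
move=> hs hz; apply/rowP => j; rewrite rowent !subE ident.
case: (ltnP j n) => hj.
  rewrite (bd_in z hi hj) hz /ev !mxE.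
  by have -> : (i == j) = (j == i :> nat) by rewrite eq_sym.
rewrite bd_out; last by rewrite negb_and -!leqNgt hj orbT.
rewrite /ev !mxE.
have -> : (j == s :> nat) = false by apply/negbTE; rewrite neq_ltn (leq_trans hs hj) orbT.
have -> : (j == i :> nat) = false by apply/negbTE; rewrite neq_ltn (leq_trans hi hj) orbT.
by rewrite !subrr.
Qed.


Lemma row_in_rowsub m r (M : 'M[F]_(m, d)) (f : 'I_r -> 'I_m) i k :
  f k = i -> (row i M <= rowsub f M)%MS.
Proof. by move=> <-; rewrite -row_rowsub row_sub. Qed.

Definition fS (k : 'I_(n.-1)) : 'I_d :=
  @Ordinal d k.+1 (ltac:(have := ltn_ord k; lia)).

Lemma fS_hit (i : 'I_d) : (0 < i)%N -> (i < n)%N -> exists k, fS k = i.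
Proof.
move=> h0 h1; have hk : (i.-1 < n.-1)%N by lia.
exists (Ordinal hk); apply: val_inj => /=; lia.
Qed.

Lemma rank_z2 : (\rank (blockdiag d (z2 F n) - 1%:M)%R <= n.-1)%N.
Proof.
apply: (@rank_rows_le _ _ _ _ _ fS) => i.
case: (ltnP i n) => hin; last by rewrite bd_row_out // sub0mx.
case: (posnP i) => hi0.
  rewrite (@bd_row_in (z2 F n) i hin 0 (ltnW hn2)); first by rewrite hi0 subrr sub0mx.
  by move=> j hj; rewrite mxE /sigma2 /= hi0 /=.
have [k hk] := fS_hit hi0 hin; exact: row_in_rowsub hk.
Qed.

Lemma z1_row (i : 'I_d) (hin : (i < n)%N) : odd n ->
  row i (blockdiag d (z1 F n) - 1%:M) = ev (sigma1 n i) - ev i.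
Proof.
move=> hodd; apply: bd_row_in; first by rewrite /sigma1; case: ifP => _; lia.
move=> j hj; rewrite mxE /= hodd /=.
case: ifP => [/andP[/eqP h0 /eqP hj1]|_] //.
by rewrite /sigma1 h0 /= hj1 eqxx.
Qed.

Lemma rank_z1 : odd n -> (\rank (blockdiag d (z1 F n) - 1%:M)%R <= n.-1)%N.
Proof.
move=> hodd; set M := (blockdiag d (z1 F n) - 1%:M)%R.
have step : forall k, (k < n)%N -> (ev k - ev 0 <= rowsub fS M)%MS.
  elim=> [|k IH] hk; first by rewrite subrr sub0mx.
  have hk' : (k.+1 < d)%N by lia.
  have [k' hk''] := @fS_hit (Ordinal hk') isT hk.
  have e : ev (k.+1) - ev 0 = (ev k - ev 0) - (ev k - ev k.+1).
    by rewrite opprB [RHS]addrC [RHS]addrA subrK.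
  rewrite e; apply: addmx_sub; first by apply: IH; lia.
  rewrite eqmx_opp -[ev k - _](z1_row (i:=Ordinal hk')) //=; first exact: row_in_rowsub hk''.
apply: (@rank_rows_le _ _ _ _ _ fS) => i.
case: (ltnP i n) => hin; last by rewrite bd_row_out // sub0mx.
case: (posnP i) => hi0.
  rewrite z1_row // /sigma1 hi0 /=; apply: step; lia.
have [k hk] := fS_hit hi0 hin; exact: row_in_rowsub hk.
Qed.

Lemma rank_E12 : (\rank (E12one F d - 1%:M)%R <= n.-1)%N.
Proof.
have h0 : (0 < d)%N by lia.
have h1 : (0 < n.-1)%N by lia.
apply: (@rank_rows_le _ _ _ _ _ (fun _ : 'I_(n.-1) => Ordinal h0)) => i.
case: (posnP i) => hi0.
  by apply: (@row_in_rowsub _ _ _ _ _ (Ordinal h1)); apply: val_inj.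
have -> : row i (E12one F d - 1%:M) = 0; last exact: sub0mx.
apply/rowP => j; rewrite rowent subE ident !mxE.
have -> : (i == 0%N :> nat) = false by lia.
by rewrite andFb orbF subrr.
Qed.

Lemma rank_t : (n == 2%N) || odd n -> (\rank (tElt F d n - 1%:M)%R <= n.-1)%N.
Proof.
move=> hn; rewrite /tElt; case: eqP => [_|/eqP hn2']; first exact: rank_E12.
have hodd : odd n by move: hn; rewrite (negbTE hn2').
by case: ifP => _; [exact: rank_z1 | exact: rank_z2].
Qed.

Lemma rank_V : (\rank (Vsp F d n) <= n)%N.
Proof.
have fk : forall k : 'I_n, (k < d)%N by move=> k; have := ltn_ord k; lia.
apply: (@rank_rows_le _ _ _ _ _ (fun k : 'I_n => Ordinal (fk k))) => i.
case: (ltnP i n) => hin.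
  by apply: (@row_in_rowsub _ _ _ _ _ (Ordinal hin)); apply: val_inj.
have -> : row i (Vsp F d n) = 0; last exact: sub0mx.
apply/rowP => j; rewrite !mxE.
have -> : (i < n)%N = false by lia.
by rewrite andbF.
Qed.
End T.

Theorem mainTheorem5 (F : finFieldType) (d n : nat)
  (hn2 : (2 <= n)%N) (hnd : (n < d)%N) (hn : (n == 2%N) || odd n)
  (E : 'M[F]_d) (hE : \det E = 1) :
  let T := invmx E *m tElt F d n *m E in
  weak_doubling n T ->
  (Vsp F d n + Vsp F d n *m T == Vsp F d n + Vsp F d n *m invmx T)%MS.
Proof.
move=> T [hrk _].
set V := Vsp F d n; set t := tElt F d n.
have hEu : E \in unitmx by rewrite unitmxE hE unitr1.
set R := ((t - 1%:M) *m E)%R.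
set S := (V + R)%MS.
have eT1 : (T - 1%:M = invmx E *m R)%R.
  by rewrite /R /T mulmxA mulmxBr mulmxBl mulmx1 mulVmx.
have hVT : (V *m T <= S)%MS.
  have -> : (V *m T = V + V *m (T - 1%:M))%R by rewrite mulmxBr mulmx1 addrC subrK.
  apply: addmx_sub; first exact: addsmxSl.
  rewrite eT1 mulmxA; apply: (submx_trans (submxMl _ R)); exact: (addsmxSr V R).
have hA : (V + V *m T <= S)%MS by rewrite addsmx_sub addsmxSl.
have hrS : (\rank S <= \rank (V + V *m T))%N.
  rewrite hrk /nprime leq_min rank_leq_col andbT.
  have h1 := (mxrank_adds_leqif V R).1.
  have h2 : (\rank V <= n)%N by apply: rank_V.
  have h3 : (\rank (t - 1%:M)%R <= n.-1)%N by apply: rank_t.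
  have h4 : (\rank R <= \rank (t - 1%:M)%R)%N := mxrankM_maxl _ _.
  rewrite /S; lia.
have hSA : (S <= V + V *m T)%MS by rewrite -(mxrank_leqif_sup hA) eqn_leq hrS mxrankS.
case: (boolP (T \in unitmx)) => hTu; last first.
  by rewrite invmx_out ?inE // submx_refl.
have hVT' : (V *m invmx T <= S)%MS.
  have -> : (V *m invmx T = V + V *m (invmx T - 1%:M))%R by rewrite mulmxBr mulmx1 addrC subrK.
  apply: addmx_sub; first exact: addsmxSl.
  have -> : (invmx T - 1%:M = - (invmx T *m (T - 1%:M)))%R.
    by rewrite mulmxBr mulVmx // mulmx1 opprB.
  rewrite mulmxN eqmx_opp eT1 mulmxA; apply: (submx_trans (submxMl _ _)); apply: (submx_trans (submxMl _ R)); exact: (addsmxSr V R).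
have hB : (V + V *m invmx T <= S)%MS by rewrite addsmx_sub addsmxSl.
have hBA := submx_trans hB hSA.
have hrB : \rank (V + V *m invmx T) = \rank (V + V *m T).
  rewrite -(mxrankMfree _ (_ : row_free T)); last by rewrite row_free_unit.
  by rewrite addsmxMr -mulmxA mulVmx // mulmx1 addsmxC.
apply/andP; split => //.
by rewrite -(mxrank_leqif_sup hBA) hrB.
Qed.
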